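(* In the standing setting, if a robust $\boldsymbol b$-flow exists, then there exists an optimal robust $\boldsymbol b$-flow $\boldsymbol f=(f^1,f^2)$ with $f^2(a)\ge f^1(a)$ for all arcs $a\in A$.
   Context: A RobMCF instance $(G,u,c,\boldsymbol b)$ consists of a finite directed graph (parallel arcs allowed) $G=(V,A)$ whose arc set is partitioned as $A=A^{\mathrm{fix}}\cup A^{\mathrm{free}}$ into fixed and free arcs, capacities $u:A\to\mathbb Z_{\ge0}$, costs $c:A\to\mathbb Z_{\ge0}$, a finite nonempty set of scenarios $\Lambda$, and balances $b^\lambda:V\to\mathbb Z$ with $\sum_{v}b^\lambda(v)=0$. A $b^\lambda$-flow is a function $f^\lambda:A\to\mathbb Z_{\ge0}$ with $f^\lambda(a)\le u(a)$ for all $a$ and $\sum_{a=(v,w)\in A}f^\lambda(a)-\sum_{a=(w,v)\in A}f^\lambda(a)=b^\lambda(v)$ for all $v\in V$; its cost is $c(f^\lambda)=\sum_a c(a)f^\lambda(a)$. A robust $\boldsymbol b$-flow is a tuple $(f^\lambda)_{\lambda\in\Lambda}$ of $b^\lambda$-flows with $f^\lambda(a)=f^{\lambda'}(a)$ for all $a\in A^{\mathrm{fix}}$, $\lambda,\lambda'\in\Lambda$; its cost is $\max_\lambda c(f^\lambda)$; it is optimal if of minimum cost. Series-parallel (SP) digraphs are defined recursively: a single arc $(o,q)$ is an SP digraph with origin $o$ and target $q$; if $G_1$ (origin $o_1$, target $q_1$) and $G_2$ (origin $o_2$, target $q_2$) are SP digraphs, then their series composition (identify $q_1$ with $o_2$;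 origin $o_1$, target $q_2$) and their parallel composition (identify $o_1$ with $o_2$ to form the origin and $q_1$ with $q_2$ to form the target) are SP digraphs. Standing setting: $G$ is an SP digraph with origin $o$ and target $q$, $\Lambda=\{1,2\}$, and there are integers $0\le d^1\le d^2$ with $b^\lambda(o)=d^\lambda$, $b^\lambda(q)=-d^\lambda$ and $b^\lambda(v)=0$ for all other $v$ (unique source $o$, unique sink $q$). *)

(* Defs.v *)
From mathcomp Require Import all_boot all_order all_algebra.
Set Implicit Arguments. Unset Strict Implicit. Unset Printing Implicit Defensive.
Import Order.TTheory GRing.Theory Num.Theory.

Inductive spt : Type :=
  | SPArc
  | SPSer of spt & spt
  | SPPar of spt & spt.

(* [sp_build t o q n] builds the SP digraph described by [t] with origin [o],
   target [q], using fresh vertex names starting at [n]; it returns the arc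
   list (tail, head) (parallel arcs = repeated pairs) and the next fresh name.
   Series composition identifies the target of the first part with the origin
   of the second (the fresh vertex [n]); parallel composition identifies the
   origins and the targets. *)
Fixpoint sp_build (t : spt) (o q n : nat) : seq (nat * nat) * nat :=
  match t with
  | SPArc => ([:: (o, q)], n)
  | SPSer t1 t2 =>
      let r1 := sp_build t1 o n n.+1 in
      let r2 := sp_build t2 n q r1.2 in
      (r1.1 ++ r2.1, r2.2)
  | SPPar t1 t2 =>
      let r1 := sp_build t1 o q n in
      let r2 := sp_build t2 o q r1.2 in
      (r1.1 ++ r2.1, r2.2)
  end.

(* The SP digraph of [t]: vertices 0 .. sp_nverts t - 1, origin 0, target 1. *)
Definition sp_arcs (t : spt) : seq (nat * nat) := (sp_build t 0 1 2).1.
Definition sp_nverts (t : spt) : nat := (sp_build t 0 1 2).2.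
Definition sp_origin : nat := 0.
Definition sp_target : nat := 1.

Notation sparc t := ('I_(size (sp_arcs t))).
Definition tl (t : spt) (a : sparc t) : nat := (nth (0, 0) (sp_arcs t) a).1.
Definition hd (t : spt) (a : sparc t) : nat := (nth (0, 0) (sp_arcs t) a).2.

Definition bal (d : nat) (v : nat) : int :=
  if v == sp_origin then Posz d else if v == sp_target then (- Posz d)%R else 0%R.

Definition is_bflow (t : spt) (u : sparc t -> nat) (d : nat) (f : sparc t -> nat) : Prop :=
  (forall a, f a <= u a) /\
  (forall v, v < sp_nverts t ->
     (Posz (\sum_(a : sparc t | tl a == v) f a) - Posz (\sum_(a : sparc t | hd a == v) f a))%R
       = bal d v).

Definition flow_cost (t : spt) (c : sparc t -> nat) (f : sparc t -> nat) : nat :=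
  \sum_(a : sparc t) c a * f a.

Definition is_robust (t : spt) (fixed : sparc t -> bool) (u : sparc t -> nat)
  (d1 d2 : nat) (f1 f2 : sparc t -> nat) : Prop :=
  [/\ is_bflow u d1 f1, is_bflow u d2 f2 & forall a, fixed a -> f1 a = f2 a].

Definition robust_cost (t : spt) (c : sparc t -> nat) (f1 f2 : sparc t -> nat) : nat :=
  maxn (flow_cost c f1) (flow_cost c f2).

Definition is_optimal_robust (t : spt) (fixed : sparc t -> bool) (u c : sparc t -> nat)
  (d1 d2 : nat) (f1 f2 : sparc t -> nat) : Prop :=
  is_robust fixed u d1 d2 f1 f2 /\
  forall g1 g2, is_robust fixed u d1 d2 g1 g2 ->
    robust_cost c f1 f2 <= robust_cost c g1 g2.

(* Main.v *)
Require Import Defs.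
From mathcomp Require Import all_boot all_order all_algebra.
From mathcomp Require Import zify.
From Stdlib Require Import Classical.
Set Implicit Arguments. Unset Strict Implicit. Unset Printing Implicit Defensive.
Import Order.TTheory GRing.Theory Num.Theory.

Local Open Scope ring_scope.

Definition balx (o q : nat) (p : int) (v : nat) : int :=
  if v == o then p else if v == q then - p else 0.

Definition exv (L : seq (nat * nat)) (f : nat -> nat) (v : nat) : int :=
  \sum_(0 <= i < size L)
    ((if (nth (0,0)%N L i).1 == v then Posz (f i) else 0)
     - (if (nth (0,0)%N L i).2 == v then Posz (f i) else 0)).

Lemma exv_ext L f g v : (forall i, (i < size L)%N -> f i = g i) -> exv L f v = exv L g v.
Proof.
move=> H; rewrite /exv big_nat [RHS]big_nat; apply: eq_bigr => i /andP[_ hi].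
by rewrite H.
Qed.

Lemma exv_cat L1 L2 f v :
  exv (L1 ++ L2) f v = exv L1 f v + exv L2 (fun i => f (size L1 + i)%N) v.
Proof.
rewrite /exv size_cat (@big_cat_nat _ _ _ (size L1)) //=; last by rewrite leq_addr.
congr (_ + _).
  rewrite big_nat [RHS]big_nat; apply: eq_bigr => i /andP[_ hi].
  by rewrite nth_cat hi.
rewrite -{1}[size L1]add0n big_addn.
rewrite addKn big_nat [RHS]big_nat.
apply: eq_bigr => i _.
by rewrite nth_cat ltnNge leq_addl /= addnK (addnC i).
Qed.

Lemma exv_notin L f v : all (fun e => (e.1 != v) && (e.2 != v)) L -> exv L f v = 0.
Proof.
move=> /allP H; rewrite /exv big_nat big1 // => i /andP[_ hi].
have /andP[/negbTE -> /negbTE ->] := H _ (mem_nth (0,0)%N hi).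
by rewrite subr0.
Qed.

Lemma sum_if_eq (S : seq nat) (x : nat) (y : int) : uniq S -> x \in S ->
  \sum_(v <- S) (if x == v then y else 0) = y.
Proof.
move=> uS xS; rewrite -big_mkcond /= big_const_seq /=.
have -> : count (fun v => x == v) S = count_mem x S.
  by apply: eq_count => v; rewrite eq_sym.
rewrite count_uniq_mem // xS /=.
by rewrite addr0.
Qed.

Lemma exv_sum0 L f (S : seq nat) : uniq S ->
  all (fun e => (e.1 \in S) && (e.2 \in S)) L -> \sum_(v <- S) exv L f v = 0.
Proof.
move=> uS /allP H; rewrite /exv exchange_big /= big_nat big1 // => i /andP[_ hi].
have /andP[h1 h2] := H _ (mem_nth (0,0)%N hi).
by rewrite sumrB !sum_if_eq // subrr.
Qed.
Definition inV (o q n m v : nat) : bool := [|| v == o, v == q | (n <= v < m)%N].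

Lemma VR t : forall o q n, let r := sp_build t o q n in
  (n <= r.2)%N /\ all (fun e => inV o q n r.2 e.1 && inV o q n r.2 e.2) r.1.
Proof.
elim: t => [|t1 IH1 t2 IH2|t1 IH1 t2 IH2] o q n /=.
- by rewrite /inV !eqxx /= orbT.
- have [h1 a1] := IH1 o n n.+1; have [h2 a2] := IH2 n q (sp_build t1 o n n.+1).2.
  split; first lia.
  rewrite all_cat; apply/andP; split.
    apply: sub_all a1 => e; rewrite /inV; lia.
  apply: sub_all a2 => e; rewrite /inV; lia.
- have [h1 a1] := IH1 o q n; have [h2 a2] := IH2 o q (sp_build t1 o q n).2.
  split; first lia.
  rewrite all_cat; apply/andP; split.
    apply: sub_all a1 => e; rewrite /inV; lia.
  apply: sub_all a2 => e; rewrite /inV; lia.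
Qed.

Lemma restrictA A B f (a b lo hi : nat) :
  a != b -> (a < lo)%N -> (b < lo)%N ->
  all (fun e => inV a b lo hi e.1 && inV a b lo hi e.2) A ->
  all (fun e => ~~ (lo <= e.1 < hi)%N && ~~ (lo <= e.2 < hi)%N) B ->
  (forall v, (lo <= v < hi)%N -> exv (A ++ B) f v = 0) ->
  forall v, exv A f v = balx a b (exv A f a) v.
Proof.
move=> hab hal hbl hA hB H.
have Hint : forall w : nat, w != a -> w != b -> exv A f w = 0.
  move=> w hwa hwb.
  case hw: (lo <= w < hi)%N.
    have := H w hw; rewrite exv_cat (@exv_notin B) ?addr0 //.
    apply: sub_all hB => -[x y] /= he; move: hw he; clear; lia.
  apply: exv_notin; apply: sub_all hA => -[x y]; rewrite /inV /=; move/negbT: hw => hw; move: hw hwa hwb; clear; lia.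
move=> v; rewrite /balx; case: eqP => [->//|/eqP hva].
case: eqP => [hvb|/eqP hvb]; last exact: Hint.
subst v.
have U : uniq (a :: b :: iota lo (hi - lo)).
  rewrite /= iota_uniq !inE !mem_iota andbT; move: hab hal hbl; clear; lia.
have Al : all (fun e => (e.1 \in a :: b :: iota lo (hi - lo)) && (e.2 \in a :: b :: iota lo (hi - lo))) A.
  apply: sub_all hA => -[x y]; rewrite /inV !inE !mem_iota /=; clear; lia.
have hs := @exv_sum0 A f _ U Al.
rewrite !big_cons big1_seq ?addr0 in hs; last first.
  move=> w /andP[_]; rewrite mem_iota => hw; apply: Hint; move: hw hal hbl; clear; lia.
by apply/eqP; rewrite -addr_eq0 addrC hs.
Qed.

Lemma bal_ser (o n q : nat) (p : int) (v : nat) : o != n -> n != q -> o != q ->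
  balx o n p v + balx n q p v = balx o q p v.
Proof.
move=> h1 h2 h3; rewrite /balx.
case: (v =P o) => [->|hvo] /=.
  by rewrite (ifN _ _ h1) (ifN _ _ h3) addr0.
case: (v =P n) => [->|hvn] /=.
  by rewrite (ifN _ _ h2) addNr.
by rewrite add0r.
Qed.

Lemma bal_par (o q : nat) (x y : int) (v : nat) : balx o q x v + balx o q y v = balx o q (x + y) v.
Proof.
rewrite /balx; case: (v =P o) => _ //=; case: (v =P q) => _ /=.
  by rewrite opprD.
by rewrite addr0.
Qed.

Lemma split_int (x1 x2 d1 d2 p : int) : Num.min d1 d2 <= p -> p <= d2 ->
  exists pL, [/\ Num.min x1 x2 <= pL, pL <= x2, Num.min (d1 - x1) (d2 - x2) <= p - pL
            & p - pL <= d2 - x2].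
Proof.
move=> h1 h2; exists (Num.max (Num.min x1 x2) (p - (d2 - x2))); split; lia.
Qed.

Lemma exv_comb A B (g1 g2 : nat -> nat) v :
  exv (A ++ B) (fun i => if (i < size A)%N then g1 i else g2 (i - size A)%N) v
  = exv A g1 v + exv B g2 v.
Proof.
rewrite exv_cat; congr (_ + _); apply: exv_ext => i hi.
  by rewrite hi.
by rewrite ltnNge leq_addr /= addKn.
Qed.

Lemma ser_split A B (o n q m1 m2 : nat) f d : o != q -> (o < n)%N -> (q < n)%N -> (n < m1)%N ->
  all (fun e => inV o n n.+1 m1 e.1 && inV o n n.+1 m1 e.2) A ->
  all (fun e => inV n q m1 m2 e.1 && inV n q m1 m2 e.2) B ->
  (forall v, exv (A ++ B) f v = balx o q d v) ->
  (forall v, exv A f v = balx o n d v) /\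
  (forall v, exv B (fun i => f (size A + i)%N) v = balx n q d v).
Proof.
move=> hoq hon hqn hnm hA hB H.
have hBo : exv B (fun i => f (size A + i)%N) o = 0.
  apply: exv_notin; apply: sub_all hB => -[x y]; rewrite /inV /=.
  move: hoq hon hqn hnm; clear; lia.
have hAo : exv A f o = d.
  by have := H o; rewrite exv_cat hBo addr0 /balx eqxx.
have hon' : o != n by move: hon; clear; lia.
have hAv : forall v, exv A f v = balx o n d v.
  rewrite -{1}hAo; apply: (@restrictA A B f o n n.+1 m1) => //.
  - by move: hon; clear; lia.
  - apply: sub_all hB => -[x y]; rewrite /inV /=; move: hqn; clear; lia.
  - move=> v hv; rewrite H /balx ifN; last by move: hv hon; clear; lia.
    by rewrite ifN //; move: hv hqn; clear; lia.
split => // v.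
have E := H v; rewrite exv_cat hAv in E.
apply: (@addrI _ (balx o n d v)); rewrite E bal_ser //.
by move: hqn; clear; lia.
Qed.

Lemma par_split A B (o q n m1 m2 : nat) f d : o != q -> (o < n)%N -> (q < n)%N -> (n <= m1)%N ->
  all (fun e => inV o q n m1 e.1 && inV o q n m1 e.2) A ->
  all (fun e => inV o q m1 m2 e.1 && inV o q m1 m2 e.2) B ->
  (forall v, exv (A ++ B) f v = balx o q d v) ->
  (forall v, exv A f v = balx o q (exv A f o) v) /\
  (forall v, exv B (fun i => f (size A + i)%N) v = balx o q (d - exv A f o) v).
Proof.
move=> hoq hon hqn hnm hA hB H.
have hAv : forall v, exv A f v = balx o q (exv A f o) v.
  apply: (@restrictA A B f o q n m1) => //.
  - apply: sub_all hB => -[x y]; rewrite /inV /=; move: hqn hon; clear; lia.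
  - move=> v hv; rewrite H /balx ifN; last by move: hv hon; clear; lia.
    by rewrite ifN //; move: hv hqn; clear; lia.
split => // v.
have E := H v; rewrite exv_cat hAv in E.
apply: (@addrI _ (balx o q (exv A f o) v)); rewrite E bal_par.
by rewrite addrC subrK.
Qed.

Lemma exv1 (o q : nat) f v : exv [:: (o, q)] f v =
  (if o == v then Posz (f 0%N) else 0) - (if q == v then Posz (f 0%N) else 0).
Proof. by rewrite /exv big_nat1. Qed.

Lemma key t : forall (o q n : nat), o != q -> (o < n)%N -> (q < n)%N ->
  forall (f1 f2 : nat -> nat) (d1 d2 : int),
  (forall v, exv (sp_build t o q n).1 f1 v = balx o q d1 v) ->
  (forall v, exv (sp_build t o q n).1 f2 v = balx o q d2 v) ->
  forall p, Num.min d1 d2 <= p -> p <= d2 ->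
  exists g : nat -> nat, (forall v, exv (sp_build t o q n).1 g v = balx o q p v) /\
    forall i, (i < size (sp_build t o q n).1)%N -> (minn (f1 i) (f2 i) <= g i <= f2 i)%N.
Proof.
elim: t => [|t1 IH1 t2 IH2|t1 IH1 t2 IH2] o q n hoq hon hqn f1 f2 d1 d2 H1 H2 p hp1 hp2 /=.
- have hqo : q != o by rewrite eq_sym.
  have e1 := H1 o; have e2 := H2 o.
  rewrite exv1 /balx eqxx (ifN _ _ hqo) subr0 in e1.
  rewrite exv1 /balx eqxx (ifN _ _ hqo) subr0 in e2.
  exists (fun _ => absz p); split.
    move=> v; rewrite exv1 /balx.
    have hp : 0 <= p by move: hp1; rewrite -e1 -e2; lia.
    rewrite abszE (ger0_norm hp).
    case: (v =P o) => [->|hvo]; first by rewrite eqxx (ifN _ _ hqo) subr0.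
    rewrite ifN; last by apply/eqP => E; apply: hvo.
    case: (v =P q) => [->|hvq]; first by rewrite eqxx sub0r.
    by rewrite ifN ?subr0 //; apply/eqP => E; apply: hvq.
  move=> i; rewrite ltnS leqn0 => /eqP ->; move: hp1 hp2; rewrite -e1 -e2; lia.
- have [hm1 a1] := VR t1 o n n.+1; have [hm2 a2] := VR t2 n q (sp_build t1 o n n.+1).2.
  have hnm : (n < (sp_build t1 o n n.+1).2)%N by [].
  have [A1 B1] := ser_split hoq hon hqn hnm a1 a2 H1.
  have [A2 B2] := ser_split hoq hon hqn hnm a1 a2 H2.
  have hon' : o != n by move: hon; clear; lia.
  have hnq : n != q by move: hqn; clear; lia.
  have ho1 : (o < n.+1)%N by move: hon; clear; lia.
  have hqm : (q < (sp_build t1 o n n.+1).2)%N by move: hqn hnm; clear; lia.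
  have [g1 [G1 C1]] := IH1 o n n.+1 hon' ho1 (ltnSn n) f1 f2 d1 d2 A1 A2 p hp1 hp2.
  have [g2 [G2 C2]] := IH2 n q _ hnq hnm hqm _ _ d1 d2 B1 B2 p hp1 hp2.
  set A := (sp_build t1 o n n.+1).1 in C1 C2 G2 *.
  exists (fun i => if (i < size A)%N then g1 i else g2 (i - size A)%N); split.
    by move=> v; rewrite exv_comb G1 G2 bal_ser.
  move=> i; rewrite size_cat => hi; case: ifP => hi1; first exact: C1.
  have hi2 : (i - size A < size (sp_build t2 n q (sp_build t1 o n n.+1).2).1)%N.
    by move: hi hi1; clear; lia.
  have := C2 _ hi2; rewrite subnKC //; move: hi1; clear; lia.
- have [hm1 a1] := VR t1 o q n; have [hm2 a2] := VR t2 o q (sp_build t1 o q n).2.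
  have [A1 B1] := par_split hoq hon hqn hm1 a1 a2 H1.
  have [A2 B2] := par_split hoq hon hqn hm1 a1 a2 H2.
  set A := (sp_build t1 o q n).1 in A1 A2 B1 B2 *.
  have [pL [h1 h2 h3 h4]] := split_int (exv A f1 o) (exv A f2 o) hp1 hp2.
  have hom : (o < (sp_build t1 o q n).2)%N by move: hon hm1; clear; lia.
  have hqm : (q < (sp_build t1 o q n).2)%N by move: hqn hm1; clear; lia.
  have [g1 [G1 C1]] := IH1 o q n hoq hon hqn f1 f2 _ _ A1 A2 pL h1 h2.
  have [g2 [G2 C2]] := IH2 o q _ hoq hom hqm _ _ _ _ B1 B2 (p - pL) h3 h4.
  exists (fun i => if (i < size A)%N then g1 i else g2 (i - size A)%N); split.
    by move=> v; rewrite exv_comb G1 G2 bal_par addrC subrK.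
  move=> i; rewrite size_cat => hi; case: ifP => hi1; first exact: C1.
  have hi2 : (i - size A < size (sp_build t2 o q (sp_build t1 o q n).2).1)%N.
    by move: hi hi1; clear; lia.
  have := C2 _ hi2; rewrite subnKC //; move: hi1; clear; lia.
Qed.

Lemma min_ex (P : nat -> Prop) : (exists n, P n) -> exists n, P n /\ forall m, P m -> (n <= m)%N.
Proof.
move=> [n Pn]; elim: n {-2}n (leqnn n) Pn => [|k IH] n hn Pn.
  by exists n; split => // m _; move: hn; clear; lia.
case: (classic (exists m, (m < n)%N /\ P m)) => [[m [hm Pm]]|Hno].
  by apply: (IH m) => //; move: hm hn; clear; lia.
exists n; split => // m Pm; rewrite leqNgt; apply/negP => hm; apply: Hno; by exists m.
Qed.

Definition natf (t : spt) (f : sparc t -> nat) (i : nat) : nat :=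
  if (insub i : option (sparc t)) is Some a then f a else 0%N.

Lemma natfE t f (a : sparc t) : natf f a = f a.
Proof. by rewrite /natf valK. Qed.

Lemma conv t (f : sparc t -> nat) v :
  (Posz (\sum_(a : sparc t | tl a == v) f a) - Posz (\sum_(a : sparc t | hd a == v) f a))
  = exv (sp_arcs t) (natf f) v.
Proof.
have E : forall P : pred (sparc t), Posz (\sum_(a : sparc t | P a) f a)
    = \sum_(a : sparc t | P a) Posz (natf f a).
  move=> P; rewrite (big_morph Posz PoszD (erefl (Posz 0))).
  by apply: eq_bigr => a _; rewrite natfE.
rewrite /exv big_mkord sumrB !E -!big_mkcond /=.
by [].
Qed.

Lemma flow_ex t (u : sparc t -> nat) d f : is_bflow u d f ->
  forall v, exv (sp_arcs t) (natf f) v = balx 0 1 (Posz d) v.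
Proof.
move=> [_ H] v.
case hv: (v < sp_nverts t)%N.
  by rewrite -conv H.
have [hm a] := VR t 0 1 2.
rewrite exv_notin.
  rewrite /balx !ifN //; move/negbT: hv hm; rewrite /sp_nverts;
  move: (sp_build t 0 1 2).2 => m; clear; lia.
move/negbT: hv; rewrite /sp_nverts => hv.
apply: sub_all a => -[x y]; rewrite /inV /=; move: hv hm;
move: (sp_build t 0 1 2).2 => m; clear; lia.
Qed.

Local Close Scope ring_scope.

Theorem mainTheorem16 (t : spt) (fixed : sparc t -> bool) (u c : sparc t -> nat)
  (d1 d2 : nat) :
  d1 <= d2 ->
  (exists f1 f2, is_robust fixed u d1 d2 f1 f2) ->
  exists f1 f2, is_optimal_robust fixed u c d1 d2 f1 f2 /\
    (forall a, f1 a <= f2 a).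
Proof.
move=> hd [f1 [f2 hr]].
have [N [[h1 [h2 [hr' hN]]] hmin]] :=
  @min_ex (fun N => exists g1 g2, is_robust fixed u d1 d2 g1 g2 /\ robust_cost c g1 g2 = N)
    (ex_intro _ _ (ex_intro _ f1 (ex_intro _ f2 (conj hr (erefl _))))).
case: hr' => B1 B2 hfix.
have E1 := flow_ex B1; have E2 := flow_ex B2.
have hp1 : (Num.min (Posz d1) (Posz d2) <= Posz d1)%R by move: hd; clear; lia.
have hp2 : (Posz d1 <= Posz d2)%R by [].
have [g [G C]] := @key t 0 1 2 isT isT isT _ _ _ _ E1 E2 (Posz d1) hp1 hp2.
have Ca : forall a : sparc t, (minn (h1 a) (h2 a) <= g a <= h2 a)%N.
  by move=> a; have := C a (ltn_ord a); rewrite !natfE.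
pose g1 : sparc t -> nat := fun a => g a.
have Bg : is_bflow u d1 g1.
  split.
    move=> a; have /andP[_ ha] := Ca a; case: B2 => cap _.
    exact: leq_trans ha (cap a).
  move=> v _; rewrite conv.
  have -> : exv (sp_arcs t) (natf g1) v = exv (sp_arcs t) g v.
    apply: exv_ext => i hi; rewrite /natf; case: insubP => [a _ <- //|].
    by rewrite hi.
  by rewrite G.
have Rg : is_robust fixed u d1 d2 g1 h2.
  split => // a fa; have := Ca a; rewrite /g1 (hfix a fa) minnn.
  by move=> /andP[h h']; apply/eqP; rewrite eqn_leq h h'.
have costle : (flow_cost c g1 <= flow_cost c h2)%N.
  rewrite /flow_cost; apply: leq_sum => a _; rewrite leq_mul2l.
  by have /andP[_ ->] := Ca a; rewrite orbT.
exists g1, h2; split; last by move=> a; have /andP[_ ->] := Ca a.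
split => // k1 k2 Rk.
have := hmin _ (ex_intro _ k1 (ex_intro _ k2 (conj Rk (erefl _)))).
rewrite -hN /robust_cost; move: costle; clear; lia.
Qed.
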